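(* A set $\mathcal{E}\subseteq \mathcal{D}/d$ is closed in the metric space $(\mathcal{D}/d, d)$ if and only if the following condition holds: for every sequence $(A_i)_{i\in\mathbb{N}}$ in $\mathcal{E}$ such that the nets $\{\nu^+(\vee_{k=i}^j A_k): i,j\in\mathbb{N}, i\le j\}$ and $\{\nu^-(\vee_{k=i}^j A_k): i,j\in\mathbb{N}, i\le j\}$ converge to a common limit $L$, the net $\{\vee_{k=i}^j A_k : i,j\in\mathbb{N}, i\le j\}$ converges (in the metric $d$) to some $A\in\mathcal{E}$ with $\nu^+(A)=L$.
   Context: Here $\mathbb{N}=\{0,1,2,\dots\}$ and for $n\ge 1$, $n$ also denotes the set $\{0,1,\dots,n-1\}$. For $A\subseteq\mathbb{N}$, $\nu^+(A):=\limsup_{n\to\infty}|A\cap n|/n$, $\nu^-(A):=\liminf_{n\to\infty}|A\cap n|/n$, and $\mathcal{D}$ is the collection of $A\subseteq\mathbb{N}$ for which $\lim_{n\to\infty}|A\cap n|/n$ exists. Define $d(A,B):=\nu^+(A\triangle B)$ on $\mathcal{P}(\mathbb{N})$, and $[A]:=\{B\subseteq\mathbb{N}: d(A,B)=0\}$. Let $\mathcal{P}(\mathbb{N})/d:=\{[A]:A\subseteq\mathbb{N}\}$ and $\mathcal{D}/d:=\{[A]:A\in\mathcal{D}\}$, with metric $d([A],[B]):=d(A,B)$ and functions $\nu^\pm([A]):=\nu^\pm(A)$ (well defined). $\mathcal{P}(\mathbb{N})/d$ is partially ordered by $[A]\le[B]\iff \nu^+(A\setminus B)=0$, and $\vee$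 denotes the least upper bound in this order (so $\vee_{k=i}^j [A_k]=[\bigcup_{k=i}^j A_k]$). The index set $\{(i,j): i,j\in\mathbb{N}, i\le j\}$ is directed by the product order $(i,j)\le(k,l)\iff i\le k$ and $j\le l$. *)

(* Defs.v *)
From Stdlib Require Import Reals List.
From Coquelicot Require Import Coquelicot.
Open Scope R_scope.

Definition nset := nat -> bool.

Definition cnt (A : nset) (n : nat) : nat := length (filter A (seq 0 n)).

Definition ratio (A : nset) (n : nat) : R := INR (cnt A n) / INR n.

(* upper and lower asymptotic densities (finite since 0 <= ratio <= 1) *)
Definition nu_plus (A : nset) : R := real (LimSup_seq (ratio A)).
Definition nu_minus (A : nset) : R := real (LimInf_seq (ratio A)).

Definition inD (A : nset) : Prop := ex_finite_lim_seq (ratio A).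

Definition symdiff (A B : nset) : nset := fun k => xorb (A k) (B k).

Definition dd (A B : nset) : R := nu_plus (symdiff A B).

Definition union_range (A : nat -> nset) (i j : nat) : nset :=
  fun x => existsb (fun k => A k x) (seq i (S j - i)).

(* Convergence of a real-valued net indexed by {(i,j) : i <= j} directed by
   the product order. *)
Definition net_cvg (x : nat -> nat -> R) (L : R) : Prop :=
  forall eps : R, 0 < eps ->
    exists i0 j0 : nat, (i0 <= j0)%nat /\
      forall i j : nat, (i <= j)%nat -> (i0 <= i)%nat -> (j0 <= j)%nat ->
        Rabs (x i j - L) < eps.

(* A subset ℰ of 𝒟/d is encoded as a predicate on representatives that is
   contained in 𝒟 and saturated under d(·,·) = 0. *)
Definition quot_subset (E : nset -> Prop) : Prop :=
  (forall A, E A -> inD A) /\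
  (forall A B, E A -> dd A B = 0 -> E B).

Definition closedD (E : nset -> Prop) : Prop :=
  forall A, inD A -> ~ E A ->
    exists eps, 0 < eps /\ forall B, inD B -> dd A B < eps -> ~ E B.

(* Main.v *)
Require Import Defs.
From Stdlib Require Import Reals List Lia Lra ZArith ClassicalEpsilon Classical.
From Coquelicot Require Import Coquelicot.
Open Scope R_scope.

Definition indb (b : bool) : nat := if b then 1%nat else 0%nat.
Definition F0 : nset := fun _ => false.

Lemma cnt_S A n : cnt A (S n) = (cnt A n + indb (A n))%nat.
Proof.
  unfold cnt. rewrite seq_S, filter_app, length_app. simpl.
  destruct (A n); simpl; lia.
Qed.

Lemma cnt_0 A : cnt A 0 = 0%nat.
Proof. reflexivity. Qed.

Lemma cnt_le_n A n : (cnt A n <= n)%nat.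
Proof. induction n; [rewrite cnt_0; lia|]. rewrite cnt_S. unfold indb; destruct (A n); lia. Qed.

Lemma cnt_lin A B C D :
  (forall x, (indb (A x) + indb (B x) <= indb (C x) + indb (D x))%nat) ->
  forall n, (cnt A n + cnt B n <= cnt C n + cnt D n)%nat.
Proof.
  intros H n; induction n; [rewrite !cnt_0; lia|].
  rewrite !cnt_S. specialize (H n). lia.
Qed.

Lemma cnt_F0 n : cnt F0 n = 0%nat.
Proof. induction n; auto. rewrite cnt_S, IHn. reflexivity. Qed.

Lemma Rinv_INR_ge0 n : 0 <= / INR n.
Proof.
  destruct n. simpl. rewrite Rinv_0. lra.
  apply Rlt_le, Rinv_0_lt_compat, lt_0_INR; lia.
Qed.

Lemma ratio_plus A B n : ratio A n + ratio B n = INR (cnt A n + cnt B n) / INR n.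
Proof. unfold ratio, Rdiv. rewrite plus_INR. ring. Qed.

Lemma ratio_lin A B C D :
  (forall x, (indb (A x) + indb (B x) <= indb (C x) + indb (D x))%nat) ->
  forall n, ratio A n + ratio B n <= ratio C n + ratio D n.
Proof.
  intros H n. rewrite !ratio_plus. unfold Rdiv.
  apply Rmult_le_compat_r. apply Rinv_INR_ge0.
  apply le_INR, cnt_lin, H.
Qed.

Lemma ratio_F0 n : ratio F0 n = 0.
Proof. unfold ratio. rewrite cnt_F0. simpl. unfold Rdiv; ring. Qed.

Lemma ratio_bounds A n : 0 <= ratio A n <= 1.
Proof.
  unfold ratio. destruct n.
  - simpl. unfold Rdiv. rewrite Rmult_0_l. lra.
  - assert (0 < INR (S n)) by (apply lt_0_INR; lia).
    split. apply Rdiv_le_0_compat; auto. apply pos_INR.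
    apply (Rmult_le_reg_r (INR (S n))); auto. unfold Rdiv.
    rewrite Rmult_assoc, Rinv_l by lra. rewrite Rmult_1_r, Rmult_1_l.
    apply le_INR, cnt_le_n.
Qed.

Lemma LimSup_fin A : is_LimSup_seq (ratio A) (nu_plus A).
Proof.
  unfold nu_plus. destruct (ex_LimSup_seq (ratio A)) as [l Hl].
  rewrite (is_LimSup_seq_unique _ _ Hl).
  destruct l; simpl; auto.
  - destruct (Hl 2%R 0%nat) as [n [_ Hn]]. pose proof (ratio_bounds A n). lra.
  - destruct (Hl (-1)%R) as [N HN]. specialize (HN N (le_n _)). pose proof (ratio_bounds A N). lra.
Qed.

Lemma LimInf_fin A : is_LimInf_seq (ratio A) (nu_minus A).
Proof.
  unfold nu_minus. destruct (ex_LimInf_seq (ratio A)) as [l Hl].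
  rewrite (is_LimInf_seq_unique _ _ Hl).
  destruct l; simpl; auto.
  - destruct (Hl 2%R) as [N HN]. specialize (HN N (le_n _)). pose proof (ratio_bounds A N). lra.
  - destruct (Hl (-1)%R 0%nat) as [n [_ Hn]]. pose proof (ratio_bounds A n). lra.
Qed.

Lemma nup_ev A eps : 0 < eps -> exists N, forall n, (N <= n)%nat -> ratio A n < nu_plus A + eps.
Proof. intros He. exact (proj2 (LimSup_fin A (mkposreal eps He))). Qed.
Lemma nup_freq A eps : 0 < eps -> forall N, exists n, (N <= n)%nat /\ nu_plus A - eps < ratio A n.
Proof. intros He. exact (proj1 (LimSup_fin A (mkposreal eps He))). Qed.
Lemma num_ev A eps : 0 < eps -> exists N, forall n, (N <= n)%nat -> nu_minus A - eps < ratio A n.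
Proof. intros He. exact (proj2 (LimInf_fin A (mkposreal eps He))). Qed.
Lemma num_freq A eps : 0 < eps -> forall N, exists n, (N <= n)%nat /\ ratio A n < nu_minus A + eps.
Proof. intros He. exact (proj1 (LimInf_fin A (mkposreal eps He))). Qed.

Lemma le_eps (a b : R) : (forall eps, 0 < eps -> a <= b + eps) -> a <= b.
Proof.
  intros H. destruct (Rle_or_lt a b); auto.
  specialize (H ((a - b)/2)). lra.
Qed.

Lemma nup_le A c :
  (forall eps, 0 < eps -> exists N, forall n, (N <= n)%nat -> ratio A n <= c + eps) ->
  nu_plus A <= c.
Proof.
  intros H. apply le_eps. intros eps He.
  destruct (H (eps/2)) as [N HN]; [lra|].
  destruct (nup_freq A (eps/2) ltac:(lra) N) as [n [Hn1 Hn2]].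
  specialize (HN n Hn1). lra.
Qed.

Lemma nup_ge0 A : 0 <= nu_plus A.
Proof.
  apply Rge_le, Rnot_lt_ge; intro Hlt.
  destruct (nup_ev A (- nu_plus A / 2) ltac:(lra)) as [N HN].
  specialize (HN N (le_n _)). pose proof (ratio_bounds A N). lra.
Qed.

Lemma num_le_nup A : nu_minus A <= nu_plus A.
Proof.
  apply le_eps. intros eps He.
  destruct (num_ev A (eps/2) ltac:(lra)) as [N1 H1].
  destruct (nup_ev A (eps/2) ltac:(lra)) as [N2 H2].
  specialize (H1 (N1+N2)%nat ltac:(lia)). specialize (H2 (N1+N2)%nat ltac:(lia)). lra.
Qed.

Lemma nup_sub X Y Z :
  (forall x, (indb (X x) <= indb (Y x) + indb (Z x))%nat) ->
  nu_plus X <= nu_plus Y + nu_plus Z.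
Proof.
  intros H. apply nup_le. intros eps He.
  destruct (nup_ev Y (eps/2) ltac:(lra)) as [N1 H1].
  destruct (nup_ev Z (eps/2) ltac:(lra)) as [N2 H2].
  exists (N1+N2)%nat. intros n Hn.
  assert (Hr := ratio_lin X F0 Y Z ltac:(intros x; specialize (H x); unfold F0 at 1; simpl; lia) n).
  rewrite ratio_F0 in Hr.
  specialize (H1 n ltac:(lia)). specialize (H2 n ltac:(lia)). lra.
Qed.

Lemma num_sub X Y Z :
  (forall x, (indb (X x) <= indb (Y x) + indb (Z x))%nat) ->
  nu_minus X <= nu_minus Y + nu_plus Z.
Proof.
  intros H. apply le_eps. intros eps He.
  destruct (num_ev X (eps/3) ltac:(lra)) as [N1 H1].
  destruct (nup_ev Z (eps/3) ltac:(lra)) as [N2 H2].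
  destruct (num_freq Y (eps/3) ltac:(lra) (N1+N2)%nat) as [n [Hn H3]].
  assert (Hr := ratio_lin X F0 Y Z ltac:(intros x; specialize (H x); unfold F0 at 1; simpl; lia) n).
  rewrite ratio_F0 in Hr.
  specialize (H1 n ltac:(lia)). specialize (H2 n ltac:(lia)). lra.
Qed.

Lemma nup_num_sub X Y Z :
  (forall x, (indb (X x) + indb (Y x) <= indb (Z x))%nat) ->
  nu_plus X + nu_minus Y <= nu_plus Z.
Proof.
  intros H. apply le_eps. intros eps He.
  destruct (num_ev Y (eps/3) ltac:(lra)) as [N1 H1].
  destruct (nup_ev Z (eps/3) ltac:(lra)) as [N2 H2].
  destruct (nup_freq X (eps/3) ltac:(lra) (N1+N2)%nat) as [n [Hn H3]].
  assert (Hr := ratio_lin X Y Z F0 ltac:(intros x; specialize (H x); unfold F0; simpl; lia) n).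
  rewrite ratio_F0 in Hr.
  specialize (H1 n ltac:(lia)). specialize (H2 n ltac:(lia)). lra.
Qed.

Lemma inD_eq A : inD A -> nu_minus A = nu_plus A.
Proof.
  intros [l Hl]. apply is_lim_seq_spec in Hl.
  apply Rle_antisym. apply num_le_nup.
  apply (Rle_trans _ l).
  - apply nup_le. intros eps He. destruct (Hl (mkposreal eps He)) as [N HN].
    exists N. intros n Hn. specialize (HN n Hn). simpl in HN.
    apply Rabs_lt_between in HN. lra.
  - apply le_eps. intros eps He. destruct (Hl (mkposreal (eps/2) ltac:(lra))) as [N HN].
    destruct (num_freq A (eps/2) ltac:(lra) N) as [n [Hn H2]].
    specialize (HN n Hn). simpl in HN. apply Rabs_lt_between in HN. lra.
Qed.

Lemma eq_inD A : nu_minus A = nu_plus A -> inD A.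
Proof.
  intros He. exists (nu_plus A). apply is_lim_seq_spec. intros eps.
  destruct (num_ev A eps (cond_pos eps)) as [N1 H1].
  destruct (nup_ev A eps (cond_pos eps)) as [N2 H2].
  exists (N1+N2)%nat. intros n Hn. apply Rabs_lt_between.
  specialize (H1 n ltac:(lia)). specialize (H2 n ltac:(lia)). split; lra.
Qed.

Lemma nat_gt r : exists K : nat, r < INR K.
Proof.
  destruct (archimed r) as [H1 _].
  destruct (Z.le_gt_cases 0 (up r)) as [Hz|Hz].
  - exists (Z.to_nat (up r)). rewrite INR_IZR_INZ, Z2Nat.id by lia. lra.
  - exists 0%nat. simpl. apply IZR_lt in Hz. lra.
Qed.

Lemma ur_spec A i j x : union_range A i j x = true <-> exists k, (i <= k <= j)%nat /\ A k x = true.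
Proof.
  unfold union_range. rewrite existsb_exists. split.
  - intros [k [Hk1 Hk2]]. apply in_seq in Hk1. exists k. split; [lia|auto].
  - intros [k [Hk1 Hk2]]. exists k. split; auto. apply in_seq. lia.
Qed.

Fixpoint srch (Nf : nat -> nat) (n t : nat) : nat :=
  match t with
  | O => O
  | S t' => if Nat.leb (Nf (S t')) n then S t' else srch Nf n t'
  end.

Lemma srch_spec Nf n q t : (q <= t)%nat -> (q = 0%nat \/ (Nf q <= n)%nat) ->
  (forall q', (q < q')%nat -> (n < Nf q')%nat) -> srch Nf n t = q.
Proof.
  intros Hqt Hq Hgt. induction t.
  - simpl. lia.
  - simpl. destruct (Nat.eq_dec q (S t)) as [->|Hne].
    + destruct Hq as [Hq|Hq]; [lia|]. apply Nat.leb_le in Hq. rewrite Hq. reflexivity.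
    + assert (Hlt : (n < Nf (S t))%nat) by (apply Hgt; lia).
      destruct (Nat.leb (Nf (S t)) n) eqn:E. apply Nat.leb_le in E. lia.
      apply IHt. lia.
Qed.

Fixpoint mkN (g : nat -> nat) (q : nat) : nat :=
  match q with O => S (g O) | S q' => (g (S q') + 2 * mkN g q')%nat end.

Lemma fin_max (P : nat -> nat -> Prop) :
  (forall m N N', (N <= N')%nat -> P m N -> P m N') -> (forall m, exists N, P m N) ->
  forall r, exists N, forall m, (m <= r)%nat -> P m N.
Proof.
  intros Hmono Hex r. induction r.
  - destruct (Hex 0%nat) as [N HN]. exists N. intros m Hm. replace m with 0%nat by lia. auto.
  - destruct IHr as [N1 H1]. destruct (Hex (S r)) as [N2 H2]. exists (N1 + N2)%nat.
    intros m Hm. destruct (Nat.eq_dec m (S r)) as [->|Hne].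
    + apply (Hmono _ N2); [lia|auto].
    + apply (Hmono _ N1); [lia|]. apply H1. lia.
Qed.

Lemma ratio_cnt A N : (0 < N)%nat -> INR (cnt A N) = ratio A N * INR N.
Proof.
  intros H. unfold ratio, Rdiv. rewrite Rmult_assoc, Rinv_l. ring.
  apply not_0_INR. lia.
Qed.

Lemma cnt_ratio_le A N c : (0 < N)%nat -> INR (cnt A N) <= c * INR N -> ratio A N <= c.
Proof.
  intros H Hc. rewrite ratio_cnt in Hc by auto.
  assert (0 < INR N) by (apply lt_0_INR; auto).
  apply (Rmult_le_reg_r (INR N)); auto.
Qed.

Lemma complete_core (Y : nat -> nset) (dl : nat -> R) :
  (forall m, 0 < dl m) ->
  (forall m q, (m <= q)%nat -> dd (Y q) (Y m) <= dl m) ->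
  exists B, forall m, dd B (Y m) <= 6 * dl m.
Proof.
  intros Hdl HY.
  assert (Hg : forall q, exists N, forall m, (m <= q)%nat -> forall n, (N <= n)%nat ->
             ratio (symdiff (Y q) (Y m)) n <= 2 * dl m).
  { intros q. destruct (fin_max (fun m N => (m <= q)%nat -> forall n, (N <= n)%nat ->
             ratio (symdiff (Y q) (Y m)) n <= 2 * dl m)) with (r := q) as [N HN].
    - intros m N N' HN HP Hm n Hn. apply HP; auto. lia.
    - intros m. destruct (le_lt_dec m q) as [Hmq|Hmq].
      + destruct (nup_ev (symdiff (Y q) (Y m)) (dl m) (Hdl m)) as [N HN].
        exists N. intros _ n Hn. specialize (HN n Hn). specialize (HY m q Hmq).
        unfold dd in HY. lra.
      + exists 0%nat. intros. lia.
    - exists N. intros m Hm. apply HN; auto. }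
  set (g := fun q => proj1_sig (constructive_indefinite_description _ (Hg q))).
  assert (Hgs : forall q m, (m <= q)%nat -> forall n, (g q <= n)%nat ->
             ratio (symdiff (Y q) (Y m)) n <= 2 * dl m).
  { intros q. exact (proj2_sig (constructive_indefinite_description _ (Hg q))). }
  clearbody g. clear Hg.
  assert (HN1 : forall q, (g q <= mkN g q)%nat) by (intros [|q]; simpl; lia).
  assert (HN2 : forall q, (2 * mkN g q <= mkN g (S q))%nat) by (intros q; simpl; lia).
  assert (HN3 : forall q, (S q <= mkN g q)%nat).
  { induction q; simpl; lia. }
  assert (HNm : forall a b, (a <= b)%nat -> (mkN g a <= mkN g b)%nat).
  { intros a b Hab. induction Hab; auto. specialize (HN2 m). lia. }
  set (Nf := mkN g) in *.
  clearbody Nf.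
  assert (Hagree : forall q n, (Nf q <= n < Nf (S q))%nat -> srch Nf n n = q).
  { intros q n Hn. apply srch_spec.
    - specialize (HN3 q). lia.
    - right; lia.
    - intros q' Hq'. specialize (HNm (S q) q' Hq'). lia. }
  exists (fun x => Y (srch Nf x x) x).
  intros m. set (B := fun x => Y (srch Nf x x) x).
  set (Sd := symdiff B (Y m)).
  assert (Hiv : forall q N k, (Nf q <= N)%nat -> (N + k <= Nf (S q))%nat ->
    (cnt Sd (N+k) + cnt (symdiff (Y q) (Y m)) N = cnt Sd N + cnt (symdiff (Y q) (Y m)) (N+k))%nat).
  { intros q N k H1 H2. induction k.
    - rewrite Nat.add_0_r. lia.
    - rewrite Nat.add_succ_r, !cnt_S.
      assert (E : Sd (N + k)%nat = symdiff (Y q) (Y m) (N + k)%nat).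
      { unfold Sd, symdiff, B. rewrite (Hagree q); auto. lia. }
      rewrite E. specialize (IHk ltac:(lia)). lia. }
  assert (HDm : forall n, cnt (symdiff (Y m) (Y m)) n = 0%nat).
  { intros n. assert (Hx : forall x, (indb (symdiff (Y m) (Y m) x) + indb (F0 x) <= indb (F0 x) + indb (F0 x))%nat).
    { intros x. unfold symdiff, F0. destruct (Y m x); simpl; lia. }
    pose proof (cnt_lin _ _ _ _ Hx n) as H. rewrite !cnt_F0 in H. lia. }
  assert (Hclaim : forall k N, (Nf (m+k)%nat <= N <= Nf (S (m+k)))%nat ->
    INR (cnt Sd N) <= INR (Nf m) + 2 * dl m * (2 * INR (Nf (m+k)%nat) + INR N)).
  { induction k; intros N HN.
    - rewrite Nat.add_0_r in *.
      pose proof (Hiv m (Nf m) (N - Nf m)%nat ltac:(lia) ltac:(lia)) as H.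
      replace (Nf m + (N - Nf m))%nat with N in H by lia.
      rewrite !HDm in H.
      pose proof (cnt_le_n Sd (Nf m)).
      assert (INR (cnt Sd N) <= INR (Nf m)) by (apply le_INR; lia).
      pose proof (pos_INR (Nf m)). pose proof (pos_INR N). pose proof (Hdl m). nra.
    - set (q := S (m + k)). replace (m + S k)%nat with q in * by (unfold q; lia).
      pose proof (Hiv q (Nf q) (N - Nf q)%nat ltac:(lia) ltac:(lia)) as H.
      replace (Nf q + (N - Nf q))%nat with N in H by lia.
      assert (H' : (cnt Sd N <= cnt Sd (Nf q) + cnt (symdiff (Y q) (Y m)) N)%nat) by lia.
      apply le_INR in H'. rewrite plus_INR in H'.
      specialize (IHk (Nf q) ltac:(split; [apply HNm; unfold q; lia| unfold q; lia])).
      assert (Hr : ratio (symdiff (Y q) (Y m)) N <= 2 * dl m).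
      { apply Hgs. unfold q; lia. specialize (HN1 q). lia. }
      apply (Rmult_le_compat_r (INR N)) in Hr; [|apply pos_INR].
      rewrite <- ratio_cnt in Hr by (specialize (HN3 q); lia).
      assert (H2 : 2 * INR (Nf (m + k)%nat) <= INR (Nf q)).
      { replace 2 with (INR 2) by (simpl; lra). rewrite <- mult_INR. apply le_INR.
        apply HN2. }
      pose proof (Hdl m). pose proof (pos_INR N). nra. }
  assert (Hcov : forall N t p, (Nf p <= N)%nat -> (N < Nf (p + t))%nat ->
     exists p', (p <= p')%nat /\ (Nf p' <= N < Nf (S p'))%nat).
  { intros N t. induction t; intros p H1 H2.
    - rewrite Nat.add_0_r in H2. lia.
    - destruct (le_lt_dec (Nf (S p)) N) as [H3|H3].
      + destruct (IHt (S p) H3 ltac:(rewrite Nat.add_succ_r in H2; simpl; lia)) as [p' [H4 H5]].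
        exists p'; split; auto; lia.
      + exists p; split; auto. }
  unfold dd. fold B. fold Sd. apply nup_le. intros eps He.
  destruct (nat_gt (INR (Nf m) / eps)) as [K HK].
  exists (Nf m + K)%nat. intros n Hn.
  destruct (Hcov n (S n) m ltac:(lia) ltac:(specialize (HN3 (m + S n)%nat); lia)) as [p' [Hp1 Hp2]].
  specialize (Hclaim (p' - m)%nat n).
  replace (m + (p' - m))%nat with p' in Hclaim by lia.
  specialize (Hclaim ltac:(lia)).
  apply cnt_ratio_le. specialize (HN3 m); lia.
  assert (HKn : INR K <= INR n) by (apply le_INR; lia).
  assert (Hpn : INR (Nf p') <= INR n) by (apply le_INR; lia).
  assert (HK' : INR (Nf m) < eps * INR K).
  { apply (Rmult_lt_compat_r eps) in HK; auto. unfold Rdiv in HK.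
    rewrite Rmult_assoc, Rinv_l in HK by lra. lra. }
  pose proof (Hdl m). pose proof (pos_INR (Nf p')). nra.
Qed.

Lemma nup_F0 : nu_plus F0 = 0.
Proof.
  apply Rle_antisym; [|apply nup_ge0]. apply nup_le. intros eps He. exists 0%nat.
  intros n _. rewrite ratio_F0. lra.
Qed.

Lemma dd_ge0 A B : 0 <= dd A B.
Proof. apply nup_ge0. Qed.

Lemma dd_tri A B C : dd A C <= dd A B + dd C B.
Proof.
  unfold dd. apply nup_sub. intros x. unfold symdiff, indb.
  destruct (A x), (B x), (C x); simpl; lia.
Qed.

Lemma dd_ext A A' B : (forall x, A x = A' x) -> dd A B <= dd A' B.
Proof.
  intros H. unfold dd. rewrite <- (Rplus_0_r (nu_plus (symdiff A' B))), <- nup_F0.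
  apply nup_sub. intros x. unfold symdiff, indb, F0. rewrite H. destruct (A' x), (B x); simpl; lia.
Qed.

Lemma nup_close A B : nu_plus A <= nu_plus B + dd A B /\ nu_plus B <= nu_plus A + dd A B.
Proof.
  unfold dd. split; apply nup_sub; intros x; unfold symdiff, indb; destruct (A x), (B x); simpl; lia.
Qed.

Lemma num_close A B : nu_minus A <= nu_minus B + dd A B /\ nu_minus B <= nu_minus A + dd A B.
Proof.
  unfold dd. split; apply num_sub; intros x; unfold symdiff, indb; destruct (A x), (B x); simpl; lia.
Qed.

Lemma dd_incl A B : (forall x, A x = true -> B x = true) -> dd A B <= nu_plus B - nu_minus A.
Proof.
  intros H. unfold dd.
  assert (nu_plus (symdiff A B) + nu_minus A <= nu_plus B); [|lra].
  apply nup_num_sub. intros x. specialize (H x). unfold symdiff, indb.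
  destruct (A x), (B x); simpl; try lia; discriminate (H eq_refl).
Qed.

Lemma ur_mono A i j i' j' x : (i' <= i)%nat -> (j <= j')%nat ->
  union_range A i j x = true -> union_range A i' j' x = true.
Proof.
  intros H1 H2 H. apply ur_spec in H. apply ur_spec. destruct H as [k [Hk1 Hk2]].
  exists k. split; auto. lia.
Qed.

Lemma ur_single A p x : union_range A p p x = A p x.
Proof.
  destruct (A p x) eqn:E.
  - apply ur_spec. exists p. split; auto.
  - destruct (union_range A p p x) eqn:E2; auto. apply ur_spec in E2.
    destruct E2 as [k [Hk1 Hk2]]. replace k with p in Hk2 by lia. congruence.
Qed.

Lemma ur_S A i j x : (i <= j)%nat ->
  union_range A i (S j) x = orb (union_range A i j x) (A (S j) x).
Proof.
  intros Hij. destruct (union_range A i (S j) x) eqn:E.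
  - apply ur_spec in E. destruct E as [k [Hk1 Hk2]].
    destruct (Nat.eq_dec k (S j)) as [->|Hne]. rewrite Hk2, Bool.orb_true_r. auto.
    assert (union_range A i j x = true) as ->. { apply ur_spec. exists k. split; auto. lia. }
    reflexivity.
  - destruct (union_range A i j x) eqn:E1.
    + rewrite (ur_mono A i j i (S j) x) in E; auto.
    + destruct (A (S j) x) eqn:E2; auto.
      assert (union_range A i (S j) x = true) by (apply ur_spec; exists (S j); split; auto).
      congruence.
Qed.

Lemma complete (X : nat -> nset) :
  (forall eps, 0 < eps -> exists K, forall p q, (K <= p)%nat -> (K <= q)%nat -> dd (X p) (X q) < eps) ->
  exists B, forall eps, 0 < eps -> exists K, forall p, (K <= p)%nat -> dd (X p) B < eps.
Proof.
  intros HC.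
  assert (Hpos : forall m, 0 < (1/2)^m) by (intros m; apply pow_lt; lra).
  set (K := fun m => proj1_sig (constructive_indefinite_description _ (HC _ (Hpos m)))).
  assert (HK : forall m p q, (K m <= p)%nat -> (K m <= q)%nat -> dd (X p) (X q) < (1/2)^m).
  { intros m. exact (proj2_sig (constructive_indefinite_description _ (HC _ (Hpos m)))). }
  clearbody K.
  set (Kp := fix Kp m := match m with O => K O | S m' => (Kp m' + K (S m'))%nat end).
  assert (HKp1 : forall m, (K m <= Kp m)%nat) by (intros [|m]; simpl; lia).
  assert (HKp2 : forall a b, (a <= b)%nat -> (Kp a <= Kp b)%nat).
  { intros a b Hab. induction Hab; auto. simpl. lia. }
  destruct (complete_core (fun m => X (Kp m)) (fun m => (1/2)^m) Hpos) as [B HB].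
  { intros m q Hmq. apply Rlt_le, HK. apply (Nat.le_trans _ _ _ (HKp1 m)), HKp2; auto. apply HKp1. }
  exists B. intros eps He.
  destruct (pow_lt_1_zero (1/2) ltac:(rewrite Rabs_pos_eq; lra) (eps/7) ltac:(lra)) as [N HN].
  exists (Kp N). intros p Hp.
  specialize (HN N (le_n _)). rewrite Rabs_pos_eq in HN by (apply Rlt_le, Hpos).
  specialize (HB N). simpl in HB.
  pose proof (HK N p (Kp N) ltac:(specialize (HKp1 N); lia) (HKp1 N)).
  pose proof (dd_tri (X p) (X (Kp N)) B). lra.
Qed.

Lemma forward (E : nset -> Prop) (HE : quot_subset E) : closedD E ->
  (forall (A : nat -> nset), (forall i, E (A i)) ->
     forall L : R,
       net_cvg (fun i j => nu_plus (union_range A i j)) L ->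
       net_cvg (fun i j => nu_minus (union_range A i j)) L ->
       exists B, E B /\
         net_cvg (fun i j => dd (union_range A i j) B) 0 /\
         nu_plus B = L).
Proof.
  intros Hcl A HA L Hp Hm.
  assert (HC : forall eps, 0 < eps -> exists i0 j0, forall i j i' j', (i <= j)%nat -> (i' <= j')%nat ->
     (i0 <= i)%nat -> (j0 <= j)%nat -> (i0 <= i')%nat -> (j0 <= j')%nat ->
     dd (union_range A i j) (union_range A i' j') < eps).
  { intros eps He.
    destruct (Hp (eps/4) ltac:(lra)) as [i1 [j1 [_ H1]]].
    destruct (Hm (eps/4) ltac:(lra)) as [i2 [j2 [_ H2]]].
    exists (i1 + i2)%nat, (j1 + j2)%nat. intros i j i' j' Hij Hij' Hi Hj Hi' Hj'.
    set (m := Nat.min i i'). set (M := Nat.max j j').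
    assert (Hb : forall a b, (a <= b)%nat -> (i1 + i2 <= a)%nat -> (j1 + j2 <= b)%nat ->
        (m <= a)%nat -> (b <= M)%nat ->
        dd (union_range A a b) (union_range A m M) < eps / 2).
    { intros a b Hab Ha Hb' Hma HbM.
      eapply Rle_lt_trans. apply dd_incl. intros x. apply ur_mono; auto.
      specialize (H1 m M ltac:(lia) ltac:(lia) ltac:(lia)).
      specialize (H2 a b Hab ltac:(lia) ltac:(lia)).
      apply Rabs_lt_between in H1. apply Rabs_lt_between in H2. lra. }
    pose proof (Hb i j Hij Hi Hj ltac:(lia) ltac:(lia)).
    pose proof (Hb i' j' Hij' Hi' Hj' ltac:(lia) ltac:(lia)).
    pose proof (dd_tri (union_range A i j) (union_range A m M) (union_range A i' j')). lra. }
  destruct (complete (fun p => union_range A p p)) as [B HB].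
  { intros eps He. destruct (HC eps He) as [i0 [j0 H]]. exists (i0 + j0)%nat.
    intros p q Hp' Hq'. apply H; lia. }
  assert (Hnet : forall eps, 0 < eps -> exists i0 j0, forall i j, (i <= j)%nat -> (i0 <= i)%nat ->
     (j0 <= j)%nat -> dd (union_range A i j) B < eps).
  { intros eps He. destruct (HC (eps/2) ltac:(lra)) as [i0 [j0 H]].
    destruct (HB (eps/2) ltac:(lra)) as [K HK].
    exists i0, j0. intros i j Hij Hi Hj.
    set (p := (i0 + j0 + K)%nat).
    specialize (H i j p p Hij (le_n _) Hi Hj ltac:(unfold p; lia) ltac:(unfold p; lia)).
    specialize (HK p ltac:(unfold p; lia)).
    pose proof (dd_tri (union_range A i j) (union_range A p p) B).
    (* dd (U p p) (U i j) vs dd (U i j) (U p p) *)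
    assert (dd (union_range A i j) B <= dd (union_range A i j) (union_range A p p) + dd (union_range A p p) B).
    { unfold dd. apply nup_sub. intros x. unfold symdiff, indb.
      destruct (union_range A i j x), (union_range A p p x), (B x); simpl; lia. }
    lra. }
  assert (Hlim : forall f : nset -> R, (forall X, f B <= f X + dd X B /\ f X <= f B + dd X B) ->
     net_cvg (fun i j => f (union_range A i j)) L -> f B = L).
  { intros f Hf Hfn. apply Rle_antisym; apply le_eps; intros eps He.
    all: destruct (Hnet (eps/2) ltac:(lra)) as [i0 [j0 H0]].
    all: destruct (Hfn (eps/2) ltac:(lra)) as [i1 [j1 [_ H1]]].
    all: set (i := (i0 + i1)%nat); set (j := (i + j0 + j1)%nat).
    all: specialize (H0 i j ltac:(unfold j; lia) ltac:(unfold i; lia) ltac:(unfold j; lia)).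
    all: specialize (H1 i j ltac:(unfold j; lia) ltac:(unfold i; lia) ltac:(unfold j; lia)).
    all: apply Rabs_lt_between in H1; destruct (Hf (union_range A i j)); lra. }
  assert (HpB : nu_plus B = L).
  { apply Hlim; auto. intros X. pose proof (nup_close X B). lra. }
  assert (HmB : nu_minus B = L).
  { apply Hlim; auto. intros X. pose proof (num_close X B). lra. }
  assert (HDB : inD B) by (apply eq_inD; congruence).
  exists B. split; [|split; auto].
  - apply NNPP. intros HnE. destruct (Hcl B HDB HnE) as [eps [He Hball]].
    destruct (HB eps He) as [K HK]. specialize (HK K (le_n _)).
    apply (Hball (A K)). apply (proj1 HE), HA.
    + assert (dd B (A K) <= dd (union_range A K K) B); [|lra].
      unfold dd. rewrite <- (Rplus_0_r (nu_plus (symdiff (union_range A K K) B))), <- nup_F0.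
      apply nup_sub. intros x. unfold symdiff, indb, F0. rewrite ur_single.
      destruct (A K x), (B x); simpl; lia.
    + apply HA.
  - intros eps He. destruct (Hnet eps He) as [i0 [j0 H]].
    exists i0, (i0 + j0)%nat. split; [lia|]. intros i j Hij Hi Hj.
    rewrite Rminus_0_r, Rabs_pos_eq by apply dd_ge0. apply H; lia.
Qed.

Lemma backward (E : nset -> Prop) (HE : quot_subset E) :
  (forall (A : nat -> nset), (forall i, E (A i)) ->
     forall L : R,
       net_cvg (fun i j => nu_plus (union_range A i j)) L ->
       net_cvg (fun i j => nu_minus (union_range A i j)) L ->
       exists B, E B /\
         net_cvg (fun i j => dd (union_range A i j) B) 0 /\
         nu_plus B = L) -> closedD E.
Proof.
  intros Hcond A HAD HnE. apply NNPP. intros Hno.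
  assert (Hpos : forall m, 0 < (1/2)^m) by (intros m; apply pow_lt; lra).
  assert (Hex : forall n, exists B, E B /\ dd A B < (1/2)^n).
  { intros n. apply NNPP. intros Hn. apply Hno. exists ((1/2)^n). split; auto.
    intros B _ Hd HEB. apply Hn. exists B; auto. }
  set (Bs := fun n => proj1_sig (constructive_indefinite_description _ (Hex n))).
  assert (HBs : forall n, E (Bs n) /\ dd A (Bs n) < (1/2)^n).
  { intros n. exact (proj2_sig (constructive_indefinite_description _ (Hex n))). }
  clearbody Bs.
  assert (Hsum : forall i k, dd (union_range Bs i (i + k)) A <= 2 * (1/2)^i - (1/2)^(i+k)).
  { intros i k. induction k.
    - rewrite Nat.add_0_r. destruct (HBs i) as [_ H].
      assert (dd (union_range Bs i i) A <= dd A (Bs i) + nu_plus F0).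
      { unfold dd. apply nup_sub. intros x. unfold symdiff, indb, F0. rewrite ur_single.
        destruct (Bs i x), (A x); simpl; lia. }
      rewrite nup_F0 in H0. lra.
    - rewrite Nat.add_succ_r. destruct (HBs (S (i + k))) as [_ H].
      assert (dd (union_range Bs i (S (i + k))) A <= dd (union_range Bs i (i + k)) A + dd A (Bs (S (i+k)))).
      { unfold dd. apply nup_sub. intros x. unfold symdiff, indb. rewrite ur_S by lia.
        destruct (union_range Bs i (i + k) x), (Bs (S (i + k)) x), (A x); simpl; lia. }
      simpl in H. simpl. lra. }
  assert (Hsm : forall eps, 0 < eps -> exists N, forall i j, (i <= j)%nat -> (N <= i)%nat ->
      dd (union_range Bs i j) A < eps).
  { intros eps He.
    destruct (pow_lt_1_zero (1/2) ltac:(rewrite Rabs_pos_eq; lra) (eps/2) ltac:(lra)) as [N HN].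
    exists N. intros i j Hij Hi. specialize (HN i Hi).
    rewrite Rabs_pos_eq in HN by (apply Rlt_le, Hpos).
    specialize (Hsum i (j - i)%nat). replace (i + (j - i))%nat with j in Hsum by lia.
    specialize (Hpos j). lra. }
  pose proof (inD_eq A HAD) as HAeq.
  destruct (Hcond Bs (fun n => proj1 (HBs n)) (nu_plus A)) as [B [HEB [HnB _]]].
  - intros eps He. destruct (Hsm eps He) as [N HN]. exists N, N. split; auto.
    intros i j Hij Hi Hj. specialize (HN i j Hij Hi).
    destruct (nup_close (union_range Bs i j) A). apply Rabs_lt_between. split; lra.
  - intros eps He. destruct (Hsm eps He) as [N HN]. exists N, N. split; auto.
    intros i j Hij Hi Hj. specialize (HN i j Hij Hi).
    destruct (num_close (union_range Bs i j) A). apply Rabs_lt_between. split; lra.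
  - apply HnE. apply (proj2 HE B); auto.
    apply Rle_antisym; [|apply dd_ge0]. apply le_eps. intros eps He.
    destruct (Hsm (eps/2) ltac:(lra)) as [N HN].
    destruct (HnB (eps/2) ltac:(lra)) as [i0 [j0 [_ H0]]].
    set (i := (N + i0)%nat). set (j := (i + j0)%nat).
    specialize (HN i j ltac:(unfold j; lia) ltac:(unfold i; lia)).
    specialize (H0 i j ltac:(unfold j; lia) ltac:(unfold i; lia) ltac:(unfold j; lia)).
    rewrite Rminus_0_r, Rabs_pos_eq in H0 by apply dd_ge0.
    assert (dd B A <= dd (union_range Bs i j) B + dd (union_range Bs i j) A).
    { unfold dd. apply nup_sub. intros x. unfold symdiff, indb.
      destruct (union_range Bs i j x), (B x), (A x); simpl; lia. }
    lra.
Qed.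

Theorem theorem1p2 (E : nset -> Prop) (HE : quot_subset E) :
  closedD E <->
  (forall (A : nat -> nset), (forall i, E (A i)) ->
     forall L : R,
       net_cvg (fun i j => nu_plus (union_range A i j)) L ->
       net_cvg (fun i j => nu_minus (union_range A i j)) L ->
       exists B, E B /\
         net_cvg (fun i j => dd (union_range A i j) B) 0 /\
         nu_plus B = L).
Proof. split; [apply forward | apply backward]; auto. Qed.
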